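(* Let $m_1,m_2\ge 0$ be integers and $\lambda=m_1\omega_1+m_2\omega_2$. Then in the representation ring of $\mathfrak{sl}_3$, \begin{align*} \psi_2(V_{\lambda}) &= \sum_{l=0}^{\min\{m_1,m_2\}}\sum_{k=0}^{m_1-l}(-1)^k\, V_{2\lambda-k\alpha_1-2l(\alpha_1+\alpha_2)} + \sum_{l=0}^{\min\{m_1,m_2\}}\sum_{k=0}^{m_2-l}(-1)^k\, V_{2\lambda-k\alpha_2-2l(\alpha_1+\alpha_2)} \\ &\quad - \sum_{l=0}^{\min\{m_1,m_2\}} V_{2\lambda-2l(\alpha_1+\alpha_2)}. \end{align*} Equivalently, writing $V_{a,b}=V_{a\omega_1+b\omega_2}$, the three sums are over $V_{2m_1-2k-2l,\,2m_2+k-2l}$, $V_{2m_1+k-2l,\,2m_2-2k-2l}$ and $V_{2m_1-2l,\,2m_2-2l}$ respectively.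
   Context: $\mathfrak{sl}_3$ has simple roots $\alpha_1=(1,-1,0)$, $\alpha_2=(0,1,-1)$ and fundamental weights $\omega_1=\frac13(2\alpha_1+\alpha_2)$, $\omega_2=\frac13(\alpha_1+2\alpha_2)$ (so $\alpha_1=2\omega_1-\omega_2$, $\alpha_2=-\omega_1+2\omega_2$). $V_\mu$ denotes the irreducible representation with dominant highest weight $\mu$. $\psi_2$ is the second Adams operation on the representation ring (virtual representations), i.e. the ring endomorphism characterized on characters by $\mathrm{ch}(\psi_2 V)(t)=\mathrm{ch}(V)(t^2)$ for $t$ in the maximal torus; equivalently, on characters viewed as symmetric functions in $x_1,x_2,x_3$ with $x_1x_2x_3=1$, it sends $f(x_1,x_2,x_3)$ to $f(x_1^2,x_2^2,x_3^2)$. *)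

(* Defs.v *)
From HB Require Import structures.
From mathcomp Require Import all_boot all_order all_algebra.
Set Implicit Arguments. Unset Strict Implicit. Unset Printing Implicit Defensive.
Import Order.TTheory GRing.Theory Num.Theory.

(* Weights of sl_3 are written in fundamental-weight coordinates:
   (a, b) : int * int stands for a*omega_1 + b*omega_2.
   A (virtual) character, i.e. an element of the representation ring
   (identified with the character ring Z[P]^W), is represented by its
   weight-multiplicity function  P -> int  (finitely supported). *)

Definition vchar := (int * int)%type -> int.

(* Weight of the monomial x1^e1 x2^e2 x3^e3 (with x1 x2 x3 = 1):
   e1 eps_1 + e2 eps_2 + e3 eps_3 = (e1 - e2) omega_1 + (e2 - e3) omega_2. *)
Definition mono_wt (e1 e2 e3 : nat) : int * int :=
  ((Posz e1 - Posz e2)%R, (Posz e2 - Posz e3)%R).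

(* Multiset of weights of V_{a omega_1 + b omega_2}, enumerated by
   Gelfand-Tsetlin patterns with top row (a+b, b, 0):
     a+b >= p1 >= b >= p2 >= 0,  p1 >= q >= p2,
   the pattern contributing the monomial x1^q x2^(p1+p2-q) x3^(a+2b-p1-p2).
   (Equivalently ch V_{a,b} is the Schur polynomial s_{(a+b,b,0)}(x1,x2,x3).) *)
Definition gt_weights (a b : nat) : seq (int * int) :=
  flatten [seq flatten [seq [seq mono_wt q (p1 + p2 - q) (a + 2 * b - p1 - p2)
                               | q <- iota p2 (p1 - p2).+1]
                          | p2 <- iota 0 b.+1]
          | p1 <- iota b a.+1].

Definition chV (a b : nat) : vchar :=
  fun mu => Posz (count (pred1 mu) (gt_weights a b)).

(* Second Adams operation: the ring endomorphism e^mu |-> e^(2 mu) of Z[P],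
   i.e. f(x1,x2,x3) |-> f(x1^2,x2^2,x3^2). *)
Definition psi2 (f : vchar) : vchar :=
  fun mu => if ((2 %| mu.1)%Z && (2 %| mu.2)%Z)
            then f ((mu.1 %/ 2)%Z, (mu.2 %/ 2)%Z) else 0%R.

(* Main.v *)
Require Import Defs.
From HB Require Import structures.
From mathcomp Require Import all_boot all_order all_algebra.
From mathcomp Require Import zify ring.
Import Order.TTheory GRing.Theory Num.Theory.
Local Open Scope ring_scope.

Definition I (b : bool) : int := if b then 1 else 0.
Definition vsub (x y : int * int) : int * int := (x.1 - y.1, x.2 - y.2).
Definition H (mu : int*int) (i j k : nat) : int := I (mono_wt i j k == mu).

Lemma shiftP (mu : int*int) i j k i' j' k' (c1 c2 : int) :
  Posz i' - Posz i - (Posz j' - Posz j) = c1 ->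
  Posz j' - Posz j - (Posz k' - Posz k) = c2 ->
  (mono_wt i j k == vsub mu (c1, c2)) = (mono_wt i' j' k' == mu).
Proof.
case: mu => x y h1 h2; rewrite /mono_wt /vsub /= !xpair_eqE.
by apply/idP/idP => /andP [/eqP e1 /eqP e2]; apply/andP; split; apply/eqP; lia.
Qed.

Definition Op (L : seq (int * (int*int))) (f : int*int -> int) (mu : int*int) : int :=
  \sum_(p <- L) p.1 * f (vsub mu p.2).

Lemma Op_sum (T : Type) L (r : seq T) (G : int*int -> T -> int) mu :
  Op L (fun nu => \sum_(i <- r) G nu i) mu = \sum_(i <- r) Op L (fun nu => G nu i) mu.
Proof.
rewrite /Op (exchange_big). apply: eq_bigr => p _.
by rewrite mulr_sumr.
Qed.

Definition L1 : seq (int * (int*int)) :=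
  [:: (1, (1,1)); (-1, (-1,2)); (-1,(2,-1)); (1,(-2,1)); (1,(1,-2)); (-1,(-1,-1))].

Definition Fm mu (i j k : nat) : int :=
  H mu i.+1 j.+1 k - H mu i.+1 j k.+1 - H mu i j.+1 k.+1 + H mu i j k.+2.

Lemma Op_H mu i j k :
  Op L1 (fun nu => H nu i j k) mu = Fm mu i.+1 j k - Fm mu i j.+1 k.
Proof.
rewrite /Op /L1 !big_cons big_nil /= /H.
rewrite (@shiftP mu i j k i.+2 j.+1 k); [|lia|lia].
rewrite (@shiftP mu i j k i.+1 j.+2 k); [|lia|lia].
rewrite (@shiftP mu i j k i.+2 j k.+1); [|lia|lia].
rewrite (@shiftP mu i j k i j.+2 k.+1); [|lia|lia].
rewrite (@shiftP mu i j k i.+1 j k.+2); [|lia|lia].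
rewrite (@shiftP mu i j k i j.+1 k.+2); [|lia|lia].
rewrite /Fm /H. ring.
Qed.
Lemma count_sumI (T : eqType) (s : seq T) (x : T) :
  Posz (count (pred1 x) s) = \sum_(y <- s) I (y == x).
Proof.
elim: s => [|y s IH]; first by rewrite big_nil.
by rewrite big_cons /= PoszD IH /I; case: (y == x).
Qed.

Lemma sum_flatten (T : Type) (ss : seq (seq T)) (F : T -> int) :
  \sum_(y <- flatten ss) F y = \sum_(s <- ss) \sum_(y <- s) F y.
Proof. by rewrite big_flatten. Qed.

Lemma chV_sum a b mu : chV a b mu =
  \sum_(p1 <- iota b a.+1) \sum_(p2 <- iota 0 b.+1) \sum_(q <- iota p2 (p1 - p2).+1)
     I (mono_wt q (p1 + p2 - q)%N (a + 2 * b - p1 - p2)%N == mu).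
Proof.
rewrite /chV count_sumI /gt_weights sum_flatten big_map.
apply: eq_bigr => p1 _; rewrite sum_flatten big_map.
by apply: eq_bigr => p2 _; rewrite big_map.
Qed.

Lemma Op_ext L f g mu : (forall nu, f nu = g nu) -> Op L f mu = Op L g mu.
Proof. by move=> e; rewrite /Op; apply: eq_bigr => p _; rewrite e. Qed.

Definition K mu (N i j : nat) : int := H mu i j (N + 3 - i - j).

Lemma tele_iota (F : nat -> int) (u : nat -> int) m n :
  (forall k, (m <= k < m + n)%N -> u k = F k.+1 - F k) ->
  \sum_(k <- iota m n) u k = F (m + n) - F m.
Proof.
move=> h. have -> : iota m n = index_iota m (m + n) by rewrite /index_iota addKn.
apply: telescope_sumr_eq; first exact: leq_addr.
exact: h.
Qed.

Lemma step1 mu (a b p1 p2 : nat) : (b <= p1)%N -> (p2 <= b)%N ->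
  \sum_(q <- iota p2 (p1 - p2).+1)
     Op L1 (fun nu => H nu q (p1 + p2 - q)%N (a + 2 * b - p1 - p2)%N) mu =
  Fm mu p1.+1 p2 (a + 2 * b - p1 - p2)%N - Fm mu p2 p1.+1 (a + 2 * b - p1 - p2)%N.
Proof.
move=> h1 h2.
rewrite (@tele_iota (fun q => Fm mu q ((p1 + p2).+1 - q)%N (a + 2 * b - p1 - p2)%N)).
  by congr (Fm _ _ _ _ - Fm _ _ _ _); lia.
move=> q hq; rewrite Op_H.
by congr (Fm _ _ _ _ - Fm _ _ _ _); lia.
Qed.

Lemma tele2 (Phi : nat -> nat -> int) m n m' n' :
  \sum_(i <- iota m n) \sum_(j <- iota m' n')
     (Phi i.+1 j.+1 - Phi i.+1 j - Phi i j.+1 + Phi i j) =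
  Phi (m + n)%N (m' + n')%N - Phi (m + n)%N m' - Phi m (m' + n')%N + Phi m m'.
Proof.
rewrite (@tele_iota (fun i => Phi i (m' + n')%N - Phi i m')).
  by ring.
move=> i _.
rewrite (@tele_iota (fun j => Phi i.+1 j - Phi i j)).
  by ring.
by move=> j _; ring.
Qed.

Lemma HK mu N i j k : (i + j + k = N + 3)%N -> H mu i j k = K mu N i j.
Proof. by move=> e; rewrite /K; congr H; lia. Qed.

Definition Phi mu N i j := K mu N i.+1 j - K mu N j i.+1.

Lemma step2 mu (a b : nat) :
  \sum_(p1 <- iota b a.+1) \sum_(p2 <- iota 0 b.+1)
    (Fm mu p1.+1 p2 (a + 2 * b - p1 - p2)%N - Fm mu p2 p1.+1 (a + 2 * b - p1 - p2)%N)
  = Phi mu (a + 2 * b) (b + a.+1)%N (0 + b.+1)%N - Phi mu (a + 2 * b) (b + a.+1)%N 0%N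
    - Phi mu (a + 2 * b) b (0 + b.+1)%N + Phi mu (a + 2 * b) b 0%N.
Proof.
rewrite -(tele2 (Phi mu (a + 2 * b))) /Phi.
rewrite big_seq_cond [RHS]big_seq_cond; apply: eq_bigr => p1 /andP [hp1 _].
rewrite big_seq_cond [RHS]big_seq_cond; apply: eq_bigr => p2 /andP [hp2 _].
move: hp1 hp2; rewrite !mem_iota => hp1 hp2.
rewrite /Fm.
by rewrite !(@HK mu (a + 2 * b)); try lia.
Qed.

Definition s1 (v : int*int) : int*int := (- v.1, v.1 + v.2).
Definition s2 (v : int*int) : int*int := (v.1 + v.2, - v.2).
Definition w0 (v : int*int) : int*int := (- v.2, - v.1).
Definition Jv (v : int*int) (mu : int*int) : int :=
  I (mu == v) - I (mu == s1 v) - I (mu == s2 v) + I (mu == s1 (s2 v))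
  + I (mu == s2 (s1 v)) - I (mu == w0 v).

Lemma Ieq (x y mu : int*int) : x = y -> I (x == mu) = I (mu == y).
Proof. by move=> ->; rewrite eq_sym. Qed.

Lemma weyl (a b : nat) mu : Op L1 (chV a b) mu = Jv (Posz a + 1, Posz b + 1) mu.
Proof.
rewrite (@Op_ext _ _ _ _ (fun nu => chV_sum a b nu)).
rewrite Op_sum.
transitivity (\sum_(p1 <- iota b a.+1) \sum_(p2 <- iota 0 b.+1)
    (Fm mu p1.+1 p2 (a + 2 * b - p1 - p2)%N - Fm mu p2 p1.+1 (a + 2 * b - p1 - p2)%N)).
  rewrite big_seq_cond [RHS]big_seq_cond; apply: eq_bigr => p1 /andP [hp1 _].
  rewrite Op_sum.
  rewrite big_seq_cond [RHS]big_seq_cond; apply: eq_bigr => p2 /andP [hp2 _].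
  move: hp1 hp2; rewrite !mem_iota => hp1 hp2.
  rewrite Op_sum step1 //; lia.
rewrite step2 /Phi /K /H !add0n /Jv /s1 /s2 /w0 /=.
rewrite (@Ieq (mono_wt (b + a.+1).+1 b.+1 _) (Posz a + 1, Posz b + 1));
  last by rewrite /mono_wt; congr (_, _); lia.
rewrite (@Ieq (mono_wt b.+1 (b + a.+1).+1 _) (- (Posz a + 1), Posz a + 1 + (Posz b + 1)));
  last by rewrite /mono_wt; congr (_, _); lia.
rewrite (@Ieq (mono_wt (b + a.+1).+1 0 _) (Posz a + 1 + (Posz b + 1), - (Posz b + 1)));
  last by rewrite /mono_wt; congr (_, _); lia.
rewrite (@Ieq (mono_wt 0 (b + a.+1).+1 _) (- (Posz a + 1 + (Posz b + 1)), Posz a + 1 + (Posz b + 1) - (Posz b + 1)));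
  last by rewrite /mono_wt; congr (_, _); lia.
rewrite (@Ieq (mono_wt b.+1 0 _) (- (Posz a + 1) + (Posz a + 1 + (Posz b + 1)), - (Posz a + 1 + (Posz b + 1))));
  last by rewrite /mono_wt; congr (_, _); lia.
rewrite (@Ieq (mono_wt 0 b.+1 _) (- (Posz b + 1), - (Posz a + 1)));
  last by rewrite /mono_wt; congr (_, _); lia.
ring.
Qed.

Definition addp (x y : int * int) : int * int := (x.1 + y.1, x.2 + y.2).
Definition coefs (L : seq (int * (int*int))) (d : int*int) : int :=
  foldr (fun p acc => p.1 * I (p.2 == d) + acc) 0 L.

Lemma Op_coef L (D : seq (int*int)) f mu : uniq D -> all (fun p => p.2 \in D) L ->
  Op L f mu = \sum_(d <- D) coefs L d * f (vsub mu d).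
Proof.
move=> uD; elim: L => [|p L IH] /=.
  by move=> _; rewrite /Op big_nil big1 // => d _; rewrite mul0r.
move=> /andP [pD aL]; rewrite /Op big_cons -/(Op L f mu) IH //.
under [RHS]eq_bigr do rewrite mulrDl.
rewrite big_split /=; congr (_ + _).
rewrite (bigD1_seq p.2) //= eqxx /I mulr1 big1 ?addr0 // => d.
by rewrite eq_sym => /negbTE ->; rewrite mulr0 mul0r.
Qed.

Lemma Op_eq L L' f mu :
  all (fun d => coefs L d == coefs L' d) (undup (map snd (L ++ L'))) ->
  Op L f mu = Op L' f mu.
Proof.
move=> h.
have uD : uniq (undup (map snd (L ++ L'))) by apply: undup_uniq.
have aL : all (fun p => p.2 \in undup (map snd (L ++ L'))) L.
  by apply/allP => p pL; rewrite mem_undup map_f // mem_cat pL.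
have aL' : all (fun p => p.2 \in undup (map snd (L ++ L'))) L'.
  by apply/allP => p pL; rewrite mem_undup map_f // mem_cat pL orbT.
rewrite (Op_coef _ _ _ _ uD aL) (Op_coef _ _ _ _ uD aL').
rewrite big_seq_cond [RHS]big_seq_cond; apply: eq_bigr => d /andP [hd _].
by move/allP: h => /(_ d hd) /eqP ->.
Qed.

Definition conv (T : seq (int*int)) (L : seq (int * (int*int))) :=
  flatten [seq [seq (p.1, addp t p.2) | p <- L] | t <- T].

Lemma Op_conv T L f mu :
  \sum_(t <- T) Op L f (vsub mu t) = Op (conv T L) f mu.
Proof.
rewrite /Op /conv big_flatten big_map; apply: eq_bigr => t _.
rewrite big_map; apply: eq_bigr => p _ /=.
by congr (_ * f _); rewrite /vsub /addp /=; congr (_, _); ring.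
Qed.

Definition L2 : seq (int * (int*int)) :=
  [:: (1, (2,2)); (-1, (-2,4)); (-1,(4,-2)); (1,(-4,2)); (1,(2,-4)); (-1,(-2,-2))].
Definition adj : seq (int*int) :=
  [:: (0,0); (0,0); (2,-1); (-2,1); (-1,2); (1,-2); (1,1); (-1,-1)].

Lemma L2_adj f mu : Op L2 f mu = \sum_(t <- adj) Op L1 f (vsub mu t).
Proof. by rewrite Op_conv; apply: Op_eq; vm_compute. Qed.

Definition Wl : seq (int * (int*int -> int*int)) :=
  [:: (1, id); (-1, s1); (-1, s2); (1, fun v => s1 (s2 v)); (1, fun v => s2 (s1 v)); (-1, w0)].

Lemma JvE v mu : Jv v mu = \sum_(p <- Wl) p.1 * I (mu == p.2 v).
Proof. by rewrite /Jv /Wl !big_cons big_nil /=; ring. Qed.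

Lemma vsub_eq mu t x : (vsub mu t == x) = (mu == addp x t).
Proof.
case: mu t x => [m1 m2] [t1 t2] [x1 x2]; rewrite /vsub /addp /= !xpair_eqE.
by apply/idP/idP => /andP [/eqP e1 /eqP e2]; apply/andP; split; apply/eqP; lia.
Qed.

Lemma sum_w (w : int*int -> int*int) v mu :
  (forall x y, w (addp x y) = addp (w x) (w y)) -> perm_eq adj (map w adj) ->
  \sum_(t <- adj) I (vsub mu t == w v) = \sum_(t <- adj) I (mu == w (addp v t)).
Proof.
move=> lin pm; rewrite (perm_big _ pm) big_map; apply: eq_bigr => t _.
by rewrite lin vsub_eq.
Qed.

Lemma sumWl (F : int * (int*int -> int*int) -> int) :
  \sum_(p <- Wl) F p = F (1, id) + F (-1, s1) + F (-1, s2) + F (1, fun v => s1 (s2 v))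
    + F (1, fun v => s2 (s1 v)) + F (-1, w0).
Proof. by rewrite /Wl !big_cons big_nil /=; ring. Qed.

Lemma Jv_shift v mu :
  \sum_(t <- adj) Jv v (vsub mu t) = \sum_(t <- adj) Jv (addp v t) mu.
Proof.
under eq_bigr do rewrite JvE.
under [RHS]eq_bigr do rewrite JvE.
rewrite exchange_big [RHS]exchange_big /= !sumWl /=.
rewrite -!mulr_sumr.
rewrite (@sum_w (fun v => s1 (s2 v)) v) ?(@sum_w (fun v => s2 (s1 v)) v)
  ?(@sum_w s1 v) ?(@sum_w s2 v) ?(@sum_w w0 v) ?(@sum_w id v) //;
  try (by vm_compute);
  try (by move=> [x1 x2] [y1 y2]; rewrite /s1 /s2 /w0 /addp /=; congr (_, _); ring).
Qed.

Lemma B2chV (a b : nat) mu :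
  Op L2 (chV a b) mu = \sum_(t <- adj) Jv (addp (Posz a + 1, Posz b + 1) t) mu.
Proof. by rewrite L2_adj; under eq_bigr do rewrite weyl; exact: Jv_shift. Qed.

Lemma ev_sub (x d : int) : (2 %| x - 2 * d)%Z = (2 %| x)%Z.
Proof.
by apply/dvdzP/dvdzP => [[k hk]|[k hk]]; [exists (k + d)| exists (k - d)]; lia.
Qed.

Lemma div_sub (x d : int) : (2 %| x)%Z -> ((x - 2 * d) %/ 2)%Z = (x %/ 2)%Z - d.
Proof.
move=> /dvdzP [k ->].
rewrite (_ : k * 2 - 2 * d = (k - d) * 2); last by ring.
by rewrite !mulzK.
Qed.

Definition dbl (p : int * (int*int)) := (p.1, (2 * p.2.1, 2 * p.2.2)).

Lemma Op_dbl L f mu : Op (map dbl L) (psi2 f) mu = psi2 (Op L f) mu.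
Proof.
rewrite /Op big_map /psi2 /=.
case: ifP => ev.
  apply: eq_bigr => p _; rewrite /dbl /vsub /= !ev_sub ev.
  by move/andP: ev => [e1 e2]; rewrite !div_sub.
by rewrite big1 // => p _; rewrite /dbl /vsub /= !ev_sub ev mulr0.
Qed.

Lemma I_dbl (mu x : int*int) : I (mu == (2 * x.1, 2 * x.2)) =
  if (2 %| mu.1)%Z && (2 %| mu.2)%Z then I ((mu.1 %/ 2, mu.2 %/ 2)%Z == x) else 0.
Proof.
case: mu x => [m1 m2] [x1 x2] /=; rewrite !xpair_eqE.
case: ifP => ev.
  move/andP: ev => [/dvdzP [k1 ->] /dvdzP [k2 ->]]; rewrite !mulzK //.
  congr I; congr andb; apply/eqP/eqP; lia.
case E1: (m1 == 2 * x1) => //; case E2: (m2 == 2 * x2) => //=.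
move: ev; move/eqP: E1 => ->; move/eqP: E2 => ->.
by rewrite !dvdz_mulr.
Qed.

Lemma I_dbl2 (mu : int*int) (x1 x2 : int) : I (mu == (2 * x1, 2 * x2)) =
  if (2 %| mu.1)%Z && (2 %| mu.2)%Z then I ((mu.1 %/ 2, mu.2 %/ 2)%Z == (x1, x2)) else 0.
Proof. exact: (I_dbl mu (x1, x2)). Qed.

Lemma psi2_Jv (x y : int) mu : psi2 (Jv (x, y)) mu = Jv (2 * x, 2 * y) mu.
Proof.
rewrite /psi2 /Jv /s1 /s2 /w0 /=.
rewrite (_ : (- (2 * x), 2 * x + 2 * y) = (2 * (- x), 2 * (x + y))); last by congr (_, _); ring.
rewrite (_ : (2 * x + 2 * y, - (2 * y)) = (2 * (x + y), 2 * (- y))); last by congr (_, _); ring.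
rewrite (_ : (- (2 * x + 2 * y), 2 * x + 2 * y + - (2 * y)) = (2 * (- (x + y)), 2 * x));
  last by congr (_, _); ring.
rewrite (_ : (- (2 * x) + (2 * x + 2 * y), - (2 * x + 2 * y)) = (2 * y, 2 * (- (x + y))));
  last by congr (_, _); ring.
rewrite (_ : (- (2 * y), - (2 * x)) = (2 * (- y), 2 * (- x))); last by congr (_, _); ring.
rewrite !I_dbl2.
case: ifP => _; last by ring.
congr (_ - _ - _ + _ + _ - _); congr I; congr (_ == _); congr (_, _); ring.
Qed.

Lemma L2E : L2 = map dbl L1.
Proof. by vm_compute. Qed.

Lemma LHS_B2 (m1 m2 : nat) mu :
  Op L2 (psi2 (chV m1 m2)) mu = Jv (2 * (Posz m1 + 1), 2 * (Posz m2 + 1)) mu.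
Proof. by rewrite L2E Op_dbl -psi2_Jv /psi2 weyl. Qed.

Lemma s1s1 v : s1 (s1 v) = v.
Proof. by case: v => x y; rewrite /s1 /=; congr (_, _); ring. Qed.
Lemma s2s2 v : s2 (s2 v) = v.
Proof. by case: v => x y; rewrite /s2 /=; congr (_, _); ring. Qed.
Lemma s1s2s1 v : s1 (s2 (s1 v)) = w0 v.
Proof. by case: v => x y; rewrite /s1 /s2 /w0 /=; congr (_, _); ring. Qed.
Lemma s2s1s2 v : s2 (s1 (s2 v)) = w0 v.
Proof. by case: v => x y; rewrite /s1 /s2 /w0 /=; congr (_, _); ring. Qed.
Lemma w0s1 v : w0 (s1 v) = s1 (s2 v).
Proof. by case: v => x y; rewrite /s1 /s2 /w0 /=; congr (_, _); ring. Qed.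
Lemma w0s2 v : w0 (s2 v) = s2 (s1 v).
Proof. by case: v => x y; rewrite /s1 /s2 /w0 /=; congr (_, _); ring. Qed.

Lemma Jv_s1 v mu : Jv (s1 v) mu = - Jv v mu.
Proof. by rewrite /Jv (s1s1 v) (s1s2s1 v) (w0s1 v); ring. Qed.

Lemma Jv_s2 v mu : Jv (s2 v) mu = - Jv v mu.
Proof. by rewrite /Jv (s2s2 v) (s2s1s2 v) (w0s2 v); ring. Qed.

Lemma Jv_wall1 y mu : Jv (0, y) mu = 0.
Proof.
have h : s1 (0, y) = (0, y) by rewrite /s1 /=; congr (_, _); ring.
have := Jv_s1 (0, y) mu; rewrite h => e; lia.
Qed.

Lemma Jv_wall2 x mu : Jv (x, 0) mu = 0.
Proof.
have h : s2 (x, 0) = (x, 0) by rewrite /s2 /=; congr (_, _); ring.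
have := Jv_s2 (x, 0) mu; rewrite h => e; lia.
Qed.

Definition Sadj v mu := \sum_(t <- adj) Jv (addp v t) mu.

Definition Pst (R : seq (int*int)) (c d : int*int) (k : nat) mu :=
  \sum_(r <- R) Jv (addp (c.1 - Posz k * d.1, c.2 - Posz k * d.2) r) mu.

Lemma Sadj_P R c d k mu : perm_eq adj (R ++ map (fun r => vsub r d) R) ->
  Sadj (c.1 - Posz k * d.1, c.2 - Posz k * d.2) mu = Pst R c d k mu + Pst R c d k.+1 mu.
Proof.
move=> pm; rewrite /Sadj (perm_big _ pm) big_cat big_map /Pst; congr (_ + _).
apply: eq_bigr => r _; congr Jv; rewrite /addp /vsub /=; congr (_, _); lia.
Qed.

Lemma string R c d n mu : perm_eq adj (R ++ map (fun r => vsub r d) R) ->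
  \sum_(k < n.+1) (-1) ^+ k * Sadj (c.1 - Posz k * d.1, c.2 - Posz k * d.2) mu =
  \sum_(r <- R) Jv (addp c r) mu + (-1) ^+ n * Pst R c d n.+1 mu.
Proof.
move=> pm.
have P0 : Pst R c d 0 mu = \sum_(r <- R) Jv (addp c r) mu.
  by apply: eq_bigr => r _; congr Jv; rewrite /addp /=; congr (_, _); lia.
elim: n => [|n IH].
  by rewrite big_ord_recr big_ord0 /= (Sadj_P R) // P0; ring.
rewrite big_ord_recr /= IH (Sadj_P R) // exprS; ring.
Qed.

Definition R1 : seq (int*int) := [:: (1,1); (0,0); (2,-1); (1,-2)].
Definition R2 : seq (int*int) := [:: (1,1); (0,0); (-1,2); (-2,1)].

Lemma Jv_congr (v v' : int*int) mu : v.1 = v'.1 -> v.2 = v'.2 -> Jv v mu = Jv v' mu.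
Proof. by case: v v' => [x y] [x' y'] /= -> ->. Qed.

Lemma bdry1 v1 v2 v3 v4 mu : v1.1 = 0 -> v4.1 = 0 -> v2 = s1 v3 ->
  Jv v1 mu + (Jv v2 mu + (Jv v3 mu + (Jv v4 mu + 0))) = 0.
Proof.
case: v1 v4 => [x1 y1] [x4 y4] /= -> -> ->.
by rewrite !Jv_wall1 Jv_s1; ring.
Qed.

Lemma bdry2 v1 v2 v3 v4 mu : v1.2 = 0 -> v4.2 = 0 -> v2 = s2 v3 ->
  Jv v1 mu + (Jv v2 mu + (Jv v3 mu + (Jv v4 mu + 0))) = 0.
Proof.
case: v1 v4 => [x1 y1] [x4 y4] /= -> -> ->.
by rewrite !Jv_wall2 Jv_s2; ring.
Qed.

Lemma bd1 (n1 n2 : nat) mu : Pst R1 (2 * Posz n1 + 1, 2 * Posz n2 + 1) (2, -1) n1.+1 mu = 0.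
Proof.
rewrite /Pst /R1 !big_cons big_nil /addp /=.
apply: bdry1 => /=; try lia.
rewrite /s1 /=; congr (_, _); lia.
Qed.

Lemma bd2 (n1 n2 : nat) mu : Pst R2 (2 * Posz n1 + 1, 2 * Posz n2 + 1) (-1, 2) n2.+1 mu = 0.
Proof.
rewrite /Pst /R2 !big_cons big_nil /addp /=.
apply: bdry2 => /=; try lia.
rewrite /s2 /=; congr (_, _); lia.
Qed.

Lemma S0 (n1 n2 : nat) mu :
  \sum_(k < n1.+1) (-1) ^+ k *
     Sadj ((2 * Posz n1 + 1) - Posz k * 2, (2 * Posz n2 + 1) - Posz k * (-1)) mu
  + \sum_(k < n2.+1) (-1) ^+ k *
     Sadj ((2 * Posz n1 + 1) - Posz k * (-1), (2 * Posz n2 + 1) - Posz k * 2) mu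
  - Sadj (2 * Posz n1 + 1, 2 * Posz n2 + 1) mu
  = Jv (2 * Posz n1 + 2, 2 * Posz n2 + 2) mu - Jv (2 * Posz n1, 2 * Posz n2) mu.
Proof.
rewrite (@string R1 (2 * Posz n1 + 1, 2 * Posz n2 + 1) (2, -1)); last by vm_compute.
rewrite (@string R2 (2 * Posz n1 + 1, 2 * Posz n2 + 1) (-1, 2)); last by vm_compute.
rewrite bd1 bd2 /Sadj /R1 /R2 /adj !big_cons !big_nil.
rewrite (@Jv_congr (addp _ (1, 1)) (2 * Posz n1 + 2, 2 * Posz n2 + 2)) /=; try lia.
rewrite (@Jv_congr (addp _ (-1, -1)) (2 * Posz n1, 2 * Posz n2)) /=; try lia.
ring.
Qed.

Lemma Op_add L f g mu : Op L (fun x => f x + g x) mu = Op L f mu + Op L g mu.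
Proof. by rewrite /Op -big_split; apply: eq_bigr => p _; rewrite mulrDr. Qed.

Lemma Op_sub L f g mu : Op L (fun x => f x - g x) mu = Op L f mu - Op L g mu.
Proof. by rewrite /Op -sumrB; apply: eq_bigr => p _; rewrite mulrBr. Qed.

Lemma Op_scale L c f mu : Op L (fun x => c * f x) mu = c * Op L f mu.
Proof. by rewrite /Op mulr_sumr; apply: eq_bigr => p _; rewrite mulrCA. Qed.

Lemma tele_l (m1 m2 : nat) mu :
  \sum_(l < (minn m1 m2).+1)
     (Jv (2 * Posz (m1 - l)%N + 2, 2 * Posz (m2 - l)%N + 2) mu
      - Jv (2 * Posz (m1 - l)%N, 2 * Posz (m2 - l)%N) mu)
  = Jv (2 * Posz m1 + 2, 2 * Posz m2 + 2) mu.
Proof.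
rewrite -(big_mkord xpredT (fun l => Jv (2 * Posz (m1 - l)%N + 2, 2 * Posz (m2 - l)%N + 2) mu
      - Jv (2 * Posz (m1 - l)%N, 2 * Posz (m2 - l)%N) mu)).
rewrite (@telescope_sumr_eq _ 0 (minn m1 m2).+1
   (fun l => - Jv (2 * Posz m1 - 2 * Posz l + 2, 2 * Posz m2 - 2 * Posz l + 2) mu)) //.
  have -> : Jv (2 * Posz m1 - 2 * Posz (minn m1 m2).+1 + 2,
                2 * Posz m2 - 2 * Posz (minn m1 m2).+1 + 2) mu = 0.
    case: (leqP m1 m2) => h.
      rewrite (@Jv_congr _ (0, 2 * Posz m2 - 2 * Posz m1)) ?Jv_wall1 //=; lia.
    rewrite (@Jv_congr _ (2 * Posz m1 - 2 * Posz m2, 0)) ?Jv_wall2 //=; lia.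
  rewrite (@Jv_congr (_ - _ + _, _) (2 * Posz m1 + 2, 2 * Posz m2 + 2)) /=; try lia.
move=> l /andP [_ hl].
rewrite (@Jv_congr (2 * Posz (m1 - l)%N + 2, _) (2 * Posz m1 - 2 * Posz l + 2, 2 * Posz m2 - 2 * Posz l + 2)) /=; try lia.
rewrite (@Jv_congr (2 * Posz (m1 - l)%N, _) (2 * Posz m1 - 2 * Posz l.+1 + 2, 2 * Posz m2 - 2 * Posz l.+1 + 2)) /=; try lia.
Qed.

Lemma Sadj_congr (v v' : int*int) mu : v.1 = v'.1 -> v.2 = v'.2 -> Sadj v mu = Sadj v' mu.
Proof. by case: v v' => [x y] [x' y'] /= -> ->. Qed.

Lemma B2S (a b : nat) mu : Op L2 (chV a b) mu = Sadj (Posz a + 1, Posz b + 1) mu.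
Proof. exact: B2chV. Qed.

Lemma RHS_B2 (m1 m2 : nat) nu :
  Op L2 (fun mu =>
    \sum_(l < (minn m1 m2).+1) \sum_(k < (m1 - l).+1)
        (-1) ^+ k * chV (2 * m1 - 2 * k - 2 * l)%N (2 * m2 + k - 2 * l)%N mu
  + \sum_(l < (minn m1 m2).+1) \sum_(k < (m2 - l).+1)
        (-1) ^+ k * chV (2 * m1 + k - 2 * l)%N (2 * m2 - 2 * k - 2 * l)%N mu
  - \sum_(l < (minn m1 m2).+1) chV (2 * m1 - 2 * l)%N (2 * m2 - 2 * l)%N mu) nu
  = Jv (2 * Posz m1 + 2, 2 * Posz m2 + 2) nu.
Proof.
rewrite Op_sub Op_add !Op_sum.
under eq_bigr do rewrite Op_sum.
under [X in _ + X - _]eq_bigr do rewrite Op_sum.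
under eq_bigr do under eq_bigr do rewrite Op_scale B2S.
under [X in _ + X - _]eq_bigr do under eq_bigr do rewrite Op_scale B2S.
under [X in _ - X]eq_bigr do rewrite B2S.
rewrite -big_split -sumrB /= -(tele_l m1 m2 nu).
apply: eq_bigr => l _.
have hl : (l <= minn m1 m2)%N by rewrite -ltnS.
rewrite -(S0 (m1 - l) (m2 - l)).
congr (_ + _ - _).
- apply: eq_bigr => k _; congr (_ * _); apply: Sadj_congr => /=.
  + have := ltn_ord k; lia.
  + have := ltn_ord k; lia.
- apply: eq_bigr => k _; congr (_ * _); apply: Sadj_congr => /=.
  + have := ltn_ord k; lia.
  + have := ltn_ord k; lia.
- apply: Sadj_congr => /=; lia.
Qed.

Lemma inj (h : int*int -> int) (N : int) : (forall mu, N < mu.1 + mu.2 -> h mu = 0) ->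
  (forall mu, Op L2 h mu = 0) -> forall mu, h mu = 0.
Proof.
move=> hs h0.
suff key : forall n : nat, forall mu, N < mu.1 + mu.2 + Posz n -> h mu = 0.
  move=> [x y]; apply: (key (absz (N - (x + y))%R).+1 (x, y)) => /=.
  have hx : N - (x + y) <= Posz (absz (N - (x + y))%R).
    by rewrite abszE; exact: ler_norm.
  lia.
elim => [|n IH] [x y] /= hmu.
  by apply: hs => /=; lia.
have := h0 (x + 2, y + 2).
rewrite /Op /L2 !big_cons big_nil /vsub /=.
have e1 : h (x + 2 - 2, y + 2 - 2) = h (x, y) by congr h; congr (_, _); ring.
have t2 : h (x + 2 - -2, y + 2 - 4) = 0 by apply: IH => /=; lia.
have t3 : h (x + 2 - 4, y + 2 - -2) = 0 by apply: IH => /=; lia.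
have t4 : h (x + 2 - -4, y + 2 - 2) = 0 by apply: IH => /=; lia.
have t5 : h (x + 2 - 2, y + 2 - -4) = 0 by apply: IH => /=; lia.
have t6 : h (x + 2 - -2, y + 2 - -2) = 0 by apply: IH => /=; lia.
rewrite e1 t2 t3 t4 t5 t6 => E; rewrite -E; ring.
Qed.

Lemma chV_zero (a b : nat) (mu : int*int) : Posz a + Posz b < mu.1 + mu.2 -> chV a b mu = 0.
Proof.
move=> h; rewrite chV_sum.
apply: big1_seq => p1 /andP [_ h1]; apply: big1_seq => p2 /andP [_ h2].
apply: big1_seq => q /andP [_ h3].
move: h1 h2 h3; rewrite !mem_iota => h1 h2 h3.
rewrite /I; case: eqP => // e; exfalso; move: h; rewrite -e /mono_wt /=; lia.
Qed.

Lemma psi2_zero (m1 m2 : nat) (mu : int*int) :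
  2 * (Posz m1 + Posz m2) < mu.1 + mu.2 -> psi2 (chV m1 m2) mu = 0.
Proof.
case: mu => x y /= h; rewrite /psi2 /=.
case: ifP => // /andP [/dvdzP [k1 e1] /dvdzP [k2 e2]].
rewrite e1 e2 !mulzK //; apply: chV_zero => /=; lia.
Qed.

Theorem theorem2 (m1 m2 : nat) (mu : int * int) :
  psi2 (chV m1 m2) mu =
    \sum_(l < (minn m1 m2).+1) \sum_(k < (m1 - l).+1)
        (-1) ^+ k * chV (2 * m1 - 2 * k - 2 * l)%N (2 * m2 + k - 2 * l)%N mu
  + \sum_(l < (minn m1 m2).+1) \sum_(k < (m2 - l).+1)
        (-1) ^+ k * chV (2 * m1 + k - 2 * l)%N (2 * m2 - 2 * k - 2 * l)%N mu
  - \sum_(l < (minn m1 m2).+1) chV (2 * m1 - 2 * l)%N (2 * m2 - 2 * l)%N mu.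
Proof.
apply/eqP; rewrite -subr_eq0; apply/eqP; move: mu.
apply: (@inj _ (2 * (Posz m1 + Posz m2))).
  move=> [x y] /= hmu.
  rewrite psi2_zero //= !big1 ?subrr // => l _;
  first [ apply: big1 => k _; rewrite chV_zero ?mulr0 //= ;
          have := ltn_ord l; have := ltn_ord k; lia
        | apply: chV_zero => /=; have := ltn_ord l; lia ].
move=> nu.
rewrite Op_sub LHS_B2 RHS_B2.
rewrite (@Jv_congr (2 * (Posz m1 + 1), _) (2 * Posz m1 + 2, 2 * Posz m2 + 2)) /=; try lia.
Qed.
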